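(* Let $T:\mathbb{Z}_{\ge 0}\to\mathbb{R}$ satisfy $T(mn) = T(m)T(n) + T(m-1)T(n-1)$ for all integers $m,n\ge 1$, and suppose $T(0)=0$ and $T(1)=1$. Write $c=T(2)$ and $d=T(3)$. Then for all $n\ge 1$, $$T(2n)=cT(n)+T(n-1)\quad\text{and}\quad T(2n-1)=T(n)+(d-c)T(n-1).$$ In particular, $T(n)$ for every $n\ge 3$ is determined by $c$ and $d$: if $T'$ is another sequence satisfying the same product rule with $T'(0)=0$, $T'(1)=1$, $T'(2)=c$, $T'(3)=d$, then $T'(n)=T(n)$ for all $n\ge 0$. *)

(* Defs.v *)
From Stdlib Require Import Reals Lra Lia.
Open Scope R_scope.

(* The product rule T(mn) = T(m)T(n) + T(m-1)T(n-1) for all m, n >= 1.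
   (nat subtraction is exact here since m, n >= 1.) *)
Definition prod_rule (T : nat -> R) : Prop :=
  forall m n : nat, (1 <= m)%nat -> (1 <= n)%nat ->
    T (m * n)%nat = T m * T n + T (m - 1)%nat * T (n - 1)%nat.

(* Main.v *)
Require Import Defs.
From Stdlib Require Import Reals Lra Lia.
Open Scope R_scope.

Lemma part1 (T : nat -> R) :
  prod_rule T -> T 0%nat = 0 -> T 1%nat = 1 ->
  (forall n : nat, (1 <= n)%nat ->
     T (2 * n)%nat = T 2%nat * T n + T (n - 1)%nat /\
     T (2 * n - 1)%nat = T n + (T 3%nat - T 2%nat) * T (n - 1)%nat).
Proof.
  intros HP H0 H1 n Hn.
  assert (E2 : forall k, (1 <= k)%nat -> T (2 * k)%nat = T 2%nat * T k + T (k - 1)%nat).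
  { intros k Hk. rewrite (HP 2%nat k) by lia. replace (2 - 1)%nat with 1%nat by lia.
    rewrite H1; ring. }
  split; [now apply E2|].
  assert (E4 : T 4%nat = T 2%nat * T 2%nat + 1).
  { replace 4%nat with (2*2)%nat by lia. rewrite E2 by lia.
    replace (2-1)%nat with 1%nat by lia. rewrite H1; ring. }
  assert (A : T (4 * n)%nat = T 4%nat * T n + T 3%nat * T (n - 1)%nat).
  { rewrite (HP 4%nat n) by lia. replace (4-1)%nat with 3%nat by lia. ring. }
  assert (B : T (4 * n)%nat = T 2%nat * T (2 * n)%nat + T (2 * n - 1)%nat).
  { replace (4 * n)%nat with (2 * (2 * n))%nat by lia. apply E2; lia. }
  rewrite (E2 n Hn) in B. rewrite E4 in A. nra.
Qed.

Theorem lemma9 (T : nat -> R) :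
  prod_rule T -> T 0%nat = 0 -> T 1%nat = 1 ->
  (forall n : nat, (1 <= n)%nat ->
     T (2 * n)%nat = T 2%nat * T n + T (n - 1)%nat /\
     T (2 * n - 1)%nat = T n + (T 3%nat - T 2%nat) * T (n - 1)%nat) /\
  (forall T' : nat -> R,
     prod_rule T' -> T' 0%nat = 0 -> T' 1%nat = 1 ->
     T' 2%nat = T 2%nat -> T' 3%nat = T 3%nat ->
     forall n : nat, T' n = T n).
Proof.
  intros HP H0 H1. split; [now apply part1|].
  intros T' HP' H0' H1' H2' H3'.
  pose proof (part1 T HP H0 H1) as P.
  pose proof (part1 T' HP' H0' H1') as P'.
  assert (forall N n, (n <= N)%nat -> T' n = T n); [|intro n; apply (H n n); lia].
  induction N as [|N IH]; intros n Hn.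
  { replace n with 0%nat by lia. congruence. }
  destruct (Nat.le_gt_cases n N) as [Hle|Hgt]; [now apply IH|].
  assert (n = S N) by lia. subst n.
  destruct (Nat.le_gt_cases (S N) 3) as [Hs|Hs].
  { destruct N as [|[|[|N]]]; try congruence; lia. }
  destruct (Nat.Even_or_Odd (S N)) as [[k Hk]|[k Hk]].
  - rewrite Hk. destruct (P k) as [Pa _]; [lia|]. destruct (P' k) as [Pa' _]; [lia|].
    rewrite Pa, Pa', H2', (IH k), (IH (k-1)%nat) by lia. reflexivity.
  - replace (S N) with (2 * (k+1) - 1)%nat by lia.
    destruct (P (k+1)%nat) as [_ Pb]; [lia|]. destruct (P' (k+1)%nat) as [_ Pb']; [lia|].
    rewrite Pb, Pb', H2', H3', (IH (k+1)%nat), (IH (k+1-1)%nat) by lia. reflexivity.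
Qed.
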